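(* Let $G$ be a graph on $d+2$ vertices whose adjacency matrix has second largest eigenvalue $\lambda_2$. If $G$ has a spherical representation in $\mathbb{R}^d$ with distance ratio $k$, then $k = \sqrt{\frac{1}{\lambda_2}+1}$; in particular $\lambda_2 > 0$.
   Context: Graphs are finite and simple; adjacency eigenvalues are listed with multiplicity as $\lambda_1\geq\lambda_2\geq\cdots$. A finite set $S\subset\mathbb{R}^d$ is a 2-distance set if $\{\|p-q\| : p,q\in S, p\neq q\}$ has exactly two elements $\alpha_1>\alpha_2$; its distance ratio is $k=\alpha_1/\alpha_2$; its associated graph has vertex set $S$ with $p,q$ adjacent iff $\|p-q\|=\alpha_1$. $G$ has a spherical representation in $\mathbb{R}^d$ with ratio $k$ if some 2-distance set in $\mathbb{R}^d$ with ratio $k$, lying on a $(d-1)$-dimensional sphere, has associated graph $G$. *)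

(* Defs.v *)
From HB Require Import structures.
From mathcomp Require Import all_boot all_order all_algebra.
From mathcomp Require Import reals.
Set Implicit Arguments. Unset Strict Implicit. Unset Printing Implicit Defensive.
Import Order.TTheory GRing.Theory Num.Theory.
Local Open Scope ring_scope.

Definition simple_graph (n : nat) (e : rel 'I_n) : Prop :=
  symmetric e /\ irreflexive e.

Definition adjmx (R : nzRingType) (n : nat) (e : rel 'I_n) : 'M[R]_n :=
  \matrix_(i, j) (e i j)%:R.

(* [s] is the list of eigenvalues of the square matrix A, listed with
   multiplicity in nonincreasing order: s is sorted (>=) and the
   characteristic polynomial of A splits as prod_(x <- s) (X - x). *)
Definition eigenvalues_desc (R : realType) (n : nat) (A : 'M[R]_n) (s : seq R) : Prop :=
  sorted (fun x y : R => y <= x) s /\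
  char_poly A = \prod_(x <- s) ('X - x%:P).

Definition edist (R : realType) (d : nat) (x y : 'rV[R]_d) : R :=
  Num.sqrt (\sum_(i < d) (x 0 i - y 0 i) ^+ 2).

(* G = (('I_n), e) has a spherical representation in R^d with ratio k:
   there is an injective placement p of the vertices (so the image S is a
   copy of the vertex set) such that S is a 2-distance set with distances
   a1 > a2 (both attained), ratio k = a1/a2, u ~ v iff |p u - p v| = a1,
   and S lies on a sphere (centre c, radius r > 0) in R^d. *)
Definition spherical_rep (R : realType) (n : nat) (e : rel 'I_n) (d : nat) (k : R) : Prop :=
  exists (p : 'I_n -> 'rV[R]_d) (a1 a2 : R),
    injective p /\
        a2 < a1 /\
        (forall u v, u != v -> edist (p u) (p v) = a1 \/ edist (p u) (p v) = a2) /\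
        (exists u v, u != v /\ edist (p u) (p v) = a1) /\
        (exists u v, u != v /\ edist (p u) (p v) = a2) /\
        k = a1 / a2 /\
        (forall u v, u != v -> (e u v <-> edist (p u) (p v) = a1)) /\
        (exists (c : 'rV[R]_d) (r : R), 0 < r /\ forall v, edist (p v) c = r).

(* Main.v *)
Require Import Defs.
From HB Require Import structures.
From mathcomp Require Import all_boot all_order all_algebra.
From mathcomp Require Import reals.
From mathcomp Require Import ring lra.
Import Order.TTheory GRing.Theory Num.Theory.
Local Open Scope ring_scope.
Set Implicit Arguments. Unset Strict Implicit. Unset Printing Implicit Defensive.

Section Spec.
Variable R : realType.

Lemma char_poly_conj n (H A : 'M[R]_n) : H *m H^T = 1%:M ->
  char_poly (H *m A *m H^T) = char_poly A.
Proof.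
move=> HH; rewrite /char_poly /char_poly_mx.
have e : 'X%:M - map_mx (@polyC R) (H *m A *m H^T) =
   map_mx (@polyC R) H *m ('X%:M - map_mx (@polyC R) A) *m map_mx (@polyC R) H^T.
  rewrite mulmxBr mulmxBl !map_mxM; congr (_ - _).
  by rewrite -mulmxA -scalar_mxC mulmxA -map_mxM HH map_mx1 mul1mx.
rewrite e !det_mulmx mulrAC -det_mulmx -map_mxM HH map_mx1 det1 mul1r //.
Qed.

Lemma dotE n (u : 'rV[R]_n) : (u *m u^T) 0 0 = \sum_i u 0 i ^+ 2.
Proof. by rewrite mxE; apply: eq_bigr => i _; rewrite mxE expr2. Qed.

Lemma dot_ge0 n (u : 'rV[R]_n) : 0 <= (u *m u^T) 0 0.
Proof. by rewrite dotE; apply: sumr_ge0 => i _; exact: sqr_ge0. Qed.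

Lemma dot_eq0 n (u : 'rV[R]_n) : ((u *m u^T) 0 0 == 0) = (u == 0).
Proof.
apply/idP/idP => [|/eqP->]; last by rewrite mul0mx mxE.
rewrite dotE => /eqP h; apply/eqP/rowP => i.
have := psumr_eq0P (fun i _ => sqr_ge0 (u 0 i)) h (i:=i) isT.
by move/eqP; rewrite sqrf_eq0 mxE => /eqP.
Qed.

Lemma dot_gt0 n (u : 'rV[R]_n) : u != 0 -> 0 < (u *m u^T) 0 0.
Proof. by move=> u0; rewrite lt_def dot_eq0 u0 dot_ge0. Qed.

Lemma mulmx_deltaT m (u : 'rV[R]_m) (j : 'I_m) :
  u *m (delta_mx 0 j)^T = (u 0 j)%:M.
Proof. by rewrite [LHS]mx11_scalar trmx_delta -colE mxE. Qed.

Lemma deltaT_mulmx m (u : 'rV[R]_m) (j : 'I_m) :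
  delta_mx 0 j *m u^T = (u 0 j)%:M.
Proof.
by rewrite -[LHS]trmxK trmx_mul trmxK mulmx_deltaT tr_scalar_mx.
Qed.

Lemma deltaT_delta m (j : 'I_m) :
  delta_mx 0 j *m (delta_mx 0 j)^T = 1%:M :> 'M[R]_1.
Proof. by rewrite mulmx_deltaT !mxE !eqxx. Qed.

Lemma householder n (w : 'rV[R]_n.+1) : w *m w^T = 1%:M ->
  exists H : 'M[R]_n.+1, H *m H^T = 1%:M /\ 'e_0 *m H = w.
Proof.
move=> ww.
have [we|wne] := eqVneq w 'e_0.
  by exists 1%:M; rewrite trmx1 mulmx1 mulmx1 we.
set h := w - 'e_0.
have hn0 : h != 0 by rewrite subr_eq0.
set q := (h *m h^T) 0 0.
have qgt0 : 0 < q := dot_gt0 hn0.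
have hh : h *m h^T = q%:M by rewrite [LHS]mx11_scalar.
set P := h^T *m h.
have PP : P *m P = q *: P.
  by rewrite /P mulmxA -[h^T *m h *m h^T]mulmxA hh mul_mx_scalar scalemxAl.
have PT : P^T = P by rewrite /P trmx_mul trmxK.
exists (1%:M - (2 / q) *: P); split.
  have HT : (1%:M - (2 / q) *: P)^T = 1%:M - (2 / q) *: P.
    by rewrite linearB /= linearZ /= PT trmx1.
  rewrite HT mulmxBl mulmxBr mulmxBr mul1mx mulmx1.
  rewrite -!scalemxAl -!scalemxAr PP scalerA scalerA.
  rewrite mul1mx.
  have qn0 : q != 0 by rewrite gt_eqF.
  have -> : 2 / q * (2 / q) * q = 2 / q + 2 / q by field.
  by apply/matrixP => i j; rewrite !mxE; ring.
have qE : q = 2 - 2 * w 0 0.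
  rewrite /q /h linearB /= mulmxBl !mulmxBr ww mulmx_deltaT deltaT_mulmx deltaT_delta.
  by rewrite !mxE eqxx /=; ring.
have eh : 'e_0 *m h^T = (w 0 0 - 1)%:M.
  rewrite /h linearB /= mulmxBr deltaT_mulmx deltaT_delta.
  by apply/matrixP => i j; rewrite !mxE !ord1 eqxx /=.
rewrite mulmxBr mulmx1 -scalemxAr /P mulmxA eh mul_scalar_mx scalerA.
have -> : 2 / q * (w 0 0 - 1) = -1.
  rewrite qE; have : 2 - 2 * w 0 0 != 0 by rewrite -qE gt_eqF.
  move=> hq; field; by [].
by rewrite scaleN1r opprK /h addrC subrK.
Qed.


Lemma spectral n (A : 'M[R]_n) (s : seq R) : A^T = A ->
  char_poly A = \prod_(x <- s) ('X - x%:P) ->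
  exists U : 'M[R]_n, U *m U^T = 1%:M /\ U *m A *m U^T = diag_mx (\row_i s`_i).
Proof.
elim: n A s => [|n IH] A s AT cA.
  by exists 0; split; apply/matrixP => -[].
have ss : size s = n.+1.
  by have := size_char_poly A; rewrite cA size_prod_XsubC => -[].
case: s ss cA => [//|s0 s'] /= [ss'] cA.
have : root (char_poly A) s0 by rewrite cA root_prod_XsubC mem_head.
rewrite -eigenvalue_root_char => /eigenvalueP [v vA vn0].
set t := (v *m v^T) 0 0.
have tgt0 : 0 < t := dot_gt0 vn0.
set nv := Num.sqrt t.
have nvgt0 : 0 < nv by rewrite sqrtr_gt0.
have nv2 : nv ^+ 2 = t by rewrite sqr_sqrtr // ltW.
set w := nv^-1 *: v.
have ww : w *m w^T = 1%:M.
  rewrite /w linearZ /= -scalemxAl -scalemxAr scalerA [v *m v^T]mx11_scalar -/t.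
  rewrite scale_scalar_mx; congr (_%:M); rewrite -nv2.
  have : nv != 0 by rewrite gt_eqF.
  by move=> h; field.
have [H [HH eH]] := householder ww.
set B := H *m A *m H^T.
have BT : B^T = B by rewrite /B !trmx_mul trmxK AT mulmxA.
have wA : w *m A = s0 *: w by rewrite /w -scalemxAl vA !scalerA mulrC.
have eB : (delta_mx 0 0 : 'rV[R]_n.+1) *m B = s0 *: delta_mx 0 0.
  by rewrite /B !mulmxA eH wA -scalemxAl -eH -mulmxA HH mulmx1.
have cB : char_poly B = char_poly A by rewrite char_poly_conj.
have Bdef : H *m A *m H^T = B by [].
clearbody B.
have B0 : forall i j : 'I_n.+1, val i = 0%N -> B i j = s0 * (val j == 0%N)%:R.
  move=> i j i0; have -> : i = 0 by apply/val_inj.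
  by have := congr1 (fun M : 'M[R]_(1, n.+1) => M 0 j) eB; rewrite -rowE !mxE => ->.
have Bs : forall i j, B i j = B j i.
  by move=> i j; have := congr1 (fun M : 'M[R]_n.+1 => M j i) BT; rewrite mxE.
set A' := drsubmx (B : 'M_(1 + n)).
have Bblk : B = block_mx (s0%:M : 'M_1) 0 0 A' :> 'M_(1 + n).
  rewrite -{1}(submxK (B : 'M_(1 + n))); congr block_mx.
  - apply/matrixP => i j; rewrite !mxE B0 /=; last by rewrite !ord1.
    by rewrite !ord1 /= mulr1.
  - apply/matrixP => i j; rewrite !mxE B0 /=; last by rewrite !ord1.
    by rewrite mulr0.
  - apply/matrixP => i j; rewrite !mxE Bs B0 /=; last by rewrite !ord1.
    by rewrite mulr0.
have A'T : A'^T = A'.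
  by apply/matrixP => i j; rewrite !mxE Bs.
have c1 : char_poly (s0%:M : 'M[R]_1) = 'X - s0%:P.
  by rewrite /char_poly det_mx11 !mxE /= !mulr1n.
have cA' : char_poly A' = \prod_(x <- s') ('X - x%:P).
  apply: (@mulfI _ ('X - s0%:P)); first by rewrite polyXsubC_eq0.
  have e0 : char_poly (block_mx (s0%:M : 'M_1) 0 0 A') = char_poly (s0%:M : 'M_1) * char_poly A'.
    by rewrite /char_poly char_block_diag_mx det_ublock.
  have e1 : char_poly B = char_poly (s0%:M : 'M_1) * char_poly A'.
    by rewrite -e0 -Bblk.
  by rewrite -c1 -e1 cB cA big_cons c1.
have [U' [UU' UA']] := IH A' s' A'T cA'.
set W : 'M[R]_(1 + n) := block_mx (1%:M : 'M_1) 0 0 U'.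
have WW : W *m W^T = 1%:M.
  rewrite /W tr_block_mx mulmx_block !trmx0 !trmx1 !mulmx0 !mul0mx !mulmx1.
  by rewrite !addr0 !add0r UU' -scalar_mx_block.
have r : \row_i (s0 :: s')`_i = row_mx (s0%:M : 'rV_1) (\row_i s'`_i) :> 'rV_(1 + n).
  apply/rowP => j; rewrite !mxE; case: splitP => k ->.
    by rewrite !ord1 !mxE eqxx mulr1n.
  by rewrite !mxE.
have WB : W *m (B : 'M_(1 + n)) *m W^T = diag_mx (\row_i (s0 :: s')`_i) :> 'M_(1 + n).
  rewrite Bblk /W tr_block_mx !trmx0 !trmx1 !mulmx_block.
  rewrite !mulmx0 !mul0mx !mulmx1 !mul1mx !addr0 !add0r UA' r diag_mx_row.
  rewrite mul0mx; congr block_mx.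
  by apply/matrixP => i j; rewrite !ord1 !mxE eqxx.
exists (W *m H); split.
  by rewrite trmx_mul mulmxA -[_ *m H *m H^T]mulmxA HH mulmx1 WW.
rewrite trmx_mul !mulmxA -[_ *m H *m A]mulmxA -[_ *m (H *m A) *m H^T]mulmxA Bdef.
by rewrite WB.
Qed.


Lemma quadU n (U A : 'M[R]_n) (d : 'rV[R]_n) : U *m U^T = 1%:M ->
  U *m A *m U^T = diag_mx d -> forall y : 'rV[R]_n,
  (y *m A *m y^T) 0 0 = \sum_i (y *m U^T) 0 i ^+ 2 * d 0 i /\
  (y *m y^T) 0 0 = \sum_i (y *m U^T) 0 i ^+ 2.
Proof.
move=> UU UA y.
have UTU : U^T *m U = 1%:M := mulmx1C UU.
set z := y *m U^T.
have zU : z *m U = y by rewrite /z -mulmxA UTU mulmx1.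
split; last first.
  rewrite -dotE -[in LHS]zU trmx_mul !mulmxA -[z *m U *m U^T]mulmxA UU.
  by rewrite mulmx1.
have e : y *m A *m y^T = z *m (U *m A *m U^T) *m z^T.
  by rewrite !mulmxA zU -[in RHS]mulmxA -trmx_mul zU.
rewrite e UA mul_mx_diag mxE; apply: eq_bigr => i _; rewrite !mxE; ring.
Qed.

Lemma sum_first2 n (F : nat -> R) : (forall k, (2 <= k)%N -> F k = 0) ->
  \sum_(i < n.+2) F i = F 0%N + F 1%N.
Proof.
move=> F0; rewrite 2!big_ord_recl big1 ?addr0 //= => i _.
by apply: F0.
Qed.

Lemma two_coeffs (b0 b1 : R) : exists a0 a1 : R,
  a0 * b0 + a1 * b1 = 0 /\ 0 < a0 ^+ 2 + a1 ^+ 2.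
Proof.
have [->|b0n] := eqVneq b0 0.
  by exists 1, 0; split; [ring | rewrite expr1n expr0n /= addr0 ltr01].
exists b1, (- b0); split; first ring.
have : 0 < b0 ^+ 2 by rewrite exprn_even_gt0.
have := sqr_ge0 b1; rewrite sqrrN; lra.
Qed.

Section Bil.
Variable n : nat.
Implicit Types (u v w : 'rV[R]_n) (M : 'M[R]_n).

Lemma entD m p (X Y : 'M[R]_(m, p)) i j : (X + Y) i j = X i j + Y i j.
Proof. by rewrite mxE. Qed.
Lemma entB m p (X Y : 'M[R]_(m, p)) i j : (X - Y) i j = X i j - Y i j.
Proof. by rewrite !mxE. Qed.
Lemma entZ m p a (X : 'M[R]_(m, p)) i j : (a *: X) i j = a * X i j.
Proof. by rewrite mxE. Qed.

Lemma qDl M u v w : ((u + v) *m M *m w^T) 0 0 = (u *m M *m w^T) 0 0 + (v *m M *m w^T) 0 0.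
Proof. by rewrite !mulmxDl entD. Qed.
Lemma qBl M u v w : ((u - v) *m M *m w^T) 0 0 = (u *m M *m w^T) 0 0 - (v *m M *m w^T) 0 0.
Proof. by rewrite !mulmxBl entB. Qed.
Lemma qZl M a u w : ((a *: u) *m M *m w^T) 0 0 = a * (u *m M *m w^T) 0 0.
Proof. by rewrite -!scalemxAl entZ. Qed.
Lemma qDr M u v w : (w *m M *m (u + v)^T) 0 0 = (w *m M *m u^T) 0 0 + (w *m M *m v^T) 0 0.
Proof. by rewrite linearD /= mulmxDr entD. Qed.
Lemma qZr M a u w : (w *m M *m (a *: u)^T) 0 0 = a * (w *m M *m u^T) 0 0.
Proof. by rewrite linearZ /= -scalemxAr entZ. Qed.
Lemma qsym M u v : M^T = M -> (u *m M *m v^T) 0 0 = (v *m M *m u^T) 0 0.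
Proof.
move=> MT; transitivity ((u *m M *m v^T)^T 0 0); first by rewrite [RHS]mxE.
by rewrite !trmx_mul trmxK MT mulmxA.
Qed.
Lemma q1 u v : (u *m v^T) 0 0 = (u *m 1%:M *m v^T) 0 0.
Proof. by rewrite mulmx1. Qed.
End Bil.

Lemma nonneg_sum0 n (u : 'rV[R]_n) : (forall i, 0 <= u 0 i) ->
  \sum_i u 0 i = 0 -> u = 0.
Proof.
move=> h s0; apply/rowP => i; rewrite mxE.
exact: (psumr_eq0P (fun i _ => h i) s0).
Qed.

Lemma core n (A : 'M[R]_n.+2) (s : seq R) (c : R) :
  0 < c -> A^T = A -> (forall i j, 0 <= A i j) ->
  sorted (fun x y => y <= x) s -> char_poly A = \prod_(x <- s) ('X - x%:P) ->
  (forall y : 'rV[R]_n.+2, y *m (const_mx 1 : 'cV[R]_n.+2) = 0 ->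
      c * (y *m A *m y^T) 0 0 <= (y *m y^T) 0 0) ->
  (exists2 x : 'rV[R]_n.+2, x != 0 & x *m (const_mx 1 : 'cV[R]_n.+2) = 0 /\ x *m A = c^-1 *: x) ->
  s`_1 = c^-1.
Proof.
move=> c0 AT Apos srt cA G1 [x xn0 [x1 xA]].
have ss : size s = n.+2.
  by have := size_char_poly A; rewrite cA size_prod_XsubC => -[].
have [U [UU UA]] := spectral AT cA.
have UTU : U^T *m U = 1%:M := mulmx1C UU.
have Q := quadU UU UA.
have tr : transitive (fun x y : R => y <= x).
  by move=> b a d h1 h2; exact: le_trans h2 h1.
have srt' := sorted_leq_nth tr (fun a => lexx a) 0 srt.
have s01 : s`_1 <= s`_0 by apply: (srt' 0%N 1%N) => //; rewrite inE ss.
have s1i : forall i : 'I_n.+2, (1 <= i)%N -> s`_i <= s`_1.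
  by move=> i hi; apply: (srt' 1%N i) => //; rewrite inE ss.
set mu := c^-1.
have mu0 : 0 < mu by rewrite invr_gt0.
apply/eqP; rewrite eq_le; apply/andP; split.
  rewrite leNgt; apply/negP => hmu.
  have [a0 [a1 [hab hpos]]] := two_coeffs ((U *m (const_mx 1 : 'cV[R]_n.+2)) (inord 0) 0)
                                           ((U *m (const_mx 1 : 'cV[R]_n.+2)) (inord 1) 0).
  pose zf (k : nat) := if k == 0%N then a0 else if k == 1%N then a1 else 0.
  have zf0 : forall k, (2 <= k)%N -> zf k = 0.
    by move=> k hk; rewrite /zf; case: k hk => [|[|k]].
  set z : 'rV[R]_n.+2 := \row_i zf i.
  set y := z *m U.
  have yU : y *m U^T = z by rewrite /y -mulmxA UU mulmx1.
  have [q1 q2] := Q y; rewrite yU in q1 q2.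
  have y1 : y *m (const_mx 1 : 'cV[R]_n.+2) = 0.
    rewrite [LHS]mx11_scalar /y -mulmxA mxE.
    rewrite (eq_bigr (fun i : 'I_n.+2 => zf i * (U *m (const_mx 1 : 'cV[R]_n.+2)) (inord i) 0)).
      rewrite (@sum_first2 n (fun k => zf k * (U *m (const_mx 1 : 'cV[R]_n.+2)) (inord k) 0)); last first.
        by move=> k hk; rewrite zf0 // mul0r.
      by rewrite /zf /= hab; apply/matrixP => i j; rewrite !mxE mul0rn.
    by move=> i _; rewrite !mxE inord_val.
  have := G1 y y1; rewrite q1 q2.
  rewrite (eq_bigr (fun i : 'I_n.+2 => zf i ^+ 2 * s`_i)); last first.
    by move=> i _; rewrite !mxE.
  rewrite [X in _ <= X](eq_bigr (fun i : 'I_n.+2 => zf i ^+ 2)); last first.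
    by move=> i _; rewrite !mxE.
  rewrite (@sum_first2 n (fun k => zf k ^+ 2 * s`_k)); last first.
    by move=> k hk; rewrite zf0 // expr0n mul0r.
  rewrite (@sum_first2 n (fun k => zf k ^+ 2)); last by move=> k hk; rewrite zf0 // expr0n.
  rewrite /zf /=.
  have h1 : 1 < c * s`_1.
    by rewrite -(mulfV (negbT (gt_eqF c0))) ltr_pM2l.
  have h0 : 1 < c * s`_0 by apply: (lt_le_trans h1); rewrite ler_pM2l.
  have ha0 := sqr_ge0 a0; have ha1 := sqr_ge0 a1.
  move=> hle.
  have : a0 ^+ 2 + a1 ^+ 2 < c * (a0 ^+ 2 * s`_0 + a1 ^+ 2 * s`_1).
    have h01 : c * s`_1 <= c * s`_0 by rewrite ler_pM2l.
    have p1 : 0 < (a0 ^+ 2 + a1 ^+ 2) * (c * s`_1 - 1).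
      by apply: mulr_gt0 => //; rewrite subr_gt0.
    have p2 : 0 <= a0 ^+ 2 * (c * s`_0 - c * s`_1).
      by apply: mulr_ge0 => //; rewrite subr_ge0.
    lra.
  by rewrite ltNge hle.
rewrite leNgt; apply/negP => hmu.
set xp : 'rV[R]_n.+2 := \row_i (if 0 <= x 0 i then x 0 i else 0).
set xm : 'rV[R]_n.+2 := \row_i (if 0 <= x 0 i then 0 else - x 0 i).
have xE : x = xp - xm.
  by apply/rowP => i; rewrite !mxE; case: lerP => _; rewrite ?subr0 ?sub0r ?opprK.
have xpge : forall i, 0 <= xp 0 i.
  by move=> i; rewrite mxE; case: ifP => h.
have xmge : forall i, 0 <= xm 0 i.
  move=> i; rewrite mxE; case: ifP => h //.
  by rewrite oppr_ge0; move/negbT: h; rewrite -ltNge => /ltW.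
have pm : (xp *m xm^T) 0 0 = 0.
  rewrite mxE big1 // => k _; rewrite !mxE; case: ifP => _; by rewrite ?mul0r ?mulr0.
have mp : (xm *m xp^T) 0 0 = 0.
  by rewrite (q1 xm) (qsym (M := 1%:M)) ?trmx1 // -q1.
have hsum : \sum_i x 0 i = 0.
  have h : (x *m (const_mx 1 : 'cV[R]_n.+2)) 0 0 = 0 by rewrite x1 mxE.
  move: h; rewrite mxE => h; apply: etrans h; apply: eq_bigr => i _.
  by rewrite mxE mulr1.
have xpn0 : xp != 0.
  apply/negP => /eqP xp0; move: xn0; rewrite xE xp0 sub0r oppr_eq0.
  apply/negP; rewrite negbK; apply/eqP; apply: nonneg_sum0 => //.
  move: hsum; rewrite xE xp0 sub0r; under eq_bigr do rewrite mxE.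
  by rewrite sumrN => /eqP; rewrite oppr_eq0 => /eqP.
have xmn0 : xm != 0.
  apply/negP => /eqP xm0; move: xn0; rewrite xE xm0 subr0.
  apply/negP; rewrite negbK; apply/eqP; apply: nonneg_sum0 => //.
  by move: hsum; rewrite xE xm0 subr0.
have Pgt0 : 0 < (xp *m xp^T) 0 0 := dot_gt0 xpn0.
have Mgt0 : 0 < (xm *m xm^T) 0 0 := dot_gt0 xmn0.
have xAv : forall v : 'rV[R]_n.+2, (x *m A *m v^T) 0 0 = mu * (x *m v^T) 0 0.
  by move=> v; rewrite xA -scalemxAl entZ.
set cc := (xm *m A *m xp^T) 0 0.
have ccge : 0 <= cc.
  rewrite /cc mxE; apply: sumr_ge0 => k _; apply: mulr_ge0; last by rewrite mxE.
  by rewrite mxE; apply: sumr_ge0 => j _; apply: mulr_ge0.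
have cc' : (xp *m A *m xm^T) 0 0 = cc by rewrite qsym.
have xpE : xp = x + xm by rewrite xE subrK.
have xmE : xm = xp - x by rewrite xE opprB addrC subrK.
have r1 : (xp *m A *m xp^T) 0 0 = mu * (xp *m xp^T) 0 0 + cc.
  rewrite {1}xpE qDl xAv; congr (_ * _ + _).
  by rewrite xE mulmxBl entB [(xm *m _) 0 0]mp subr0.
have r2 : (xm *m A *m xm^T) 0 0 = mu * (xm *m xm^T) 0 0 + cc.
  rewrite {1}xmE qBl xAv cc'.
  have -> : (x *m xm^T) 0 0 = - (xm *m xm^T) 0 0 by rewrite xE mulmxBl entB pm sub0r.
  ring.
have [a0 [a1 [hab hpos]]] := two_coeffs ((xp *m U^T) 0 0) ((xm *m U^T) 0 0).
set y := a0 *: xp + a1 *: xm.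
have yy : (y *m y^T) 0 0 = a0 ^+ 2 * (xp *m xp^T) 0 0 + a1 ^+ 2 * (xm *m xm^T) 0 0.
  rewrite [LHS]q1 /y qDl !qZl !qDr !qZr -!q1 pm mp; ring.
have yAy : (y *m A *m y^T) 0 0 = mu * (y *m y^T) 0 0 + cc * (a0 + a1) ^+ 2.
  rewrite yy /y qDl !qZl !qDr !qZr r1 r2 cc' -/cc; ring.
have yypos : 0 < (y *m y^T) 0 0.
  rewrite yy.
  have h0 := sqr_ge0 a0; have h1 := sqr_ge0 a1.
  have m0 : 0 <= a0 ^+ 2 * ((xp *m xp^T) 0 0 - (xm *m xm^T) 0 0) \/
            0 <= a1 ^+ 2 * ((xm *m xm^T) 0 0 - (xp *m xp^T) 0 0).
    case: (lerP ((xm *m xm^T) 0 0) ((xp *m xp^T) 0 0)) => h.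
      by left; apply: mulr_ge0 => //; rewrite subr_ge0.
    by right; apply: mulr_ge0 => //; rewrite subr_ge0 ltW.
  have p1 : 0 < (a0 ^+ 2 + a1 ^+ 2) * (xm *m xm^T) 0 0 by apply: mulr_gt0.
  have p2 : 0 < (a0 ^+ 2 + a1 ^+ 2) * (xp *m xp^T) 0 0 by apply: mulr_gt0.
  case: m0 => m0; lra.
have z0 : (y *m U^T) 0 0 = 0.
  by rewrite /y mulmxDl -!scalemxAl entD !entZ.
have [q1' q2'] := Q y.
have : (y *m A *m y^T) 0 0 <= s`_1 * (y *m y^T) 0 0.
  rewrite q1' q2' mulr_sumr; apply: ler_sum => i _.
  have [->|i0] := eqVneq i 0; first by rewrite z0 expr0n !mul0r mulr0.
  rewrite [X in _ * X <= _]mxE.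
  rewrite mulrC; apply: ler_wpM2r; first exact: sqr_ge0.
  by apply: s1i; rewrite lt0n; apply: contra i0 => /eqP h; apply/eqP/val_inj.
rewrite yAy.
have : s`_1 * (y *m y^T) 0 0 < mu * (y *m y^T) 0 0 by rewrite ltr_pM2r.
have : 0 <= cc * (a0 + a1) ^+ 2 by apply: mulr_ge0 => //; exact: sqr_ge0.
lra.
Qed.

End Spec.

Section Geo.
Variable R : realType.

Lemma edist_sq d (x y : 'rV[R]_d) : edist x y ^+ 2 = \sum_i (x 0 i - y 0 i) ^+ 2.
Proof. by rewrite /edist sqr_sqrtr // sumr_ge0 // => i _; exact: sqr_ge0. Qed.

Lemma geo d (e : rel 'I_(d.+2)) (k : R) :
  simple_graph e -> spherical_rep e d k ->
  let A := adjmx R e in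
  1 < k /\
  (forall y : 'rV[R]_d.+2, y *m (const_mx 1 : 'cV[R]_d.+2) = 0 ->
      (k ^+ 2 - 1) * (y *m A *m y^T) 0 0 <= (y *m y^T) 0 0) /\
  (exists2 x : 'rV[R]_d.+2, x != 0 &
     x *m (const_mx 1 : 'cV[R]_d.+2) = 0 /\ x *m A = (k ^+ 2 - 1)^-1 *: x).
Proof.
move=> [esym eirr] [p [a1 [a2 [pinj [a21 [pdist [_ [[u2 [v2 [uv2 d2]]]
  [kE [eE [cen [r [r0 pr]]]]]]]]]]]]] A.
have a2ge : 0 <= a2 by rewrite -d2 sqrtr_ge0.
have a2gt : 0 < a2.
  rewrite lt_def a2ge andbT; apply/negP => /eqP a20.
  have : edist (p u2) (p v2) == 0 by rewrite d2 a20.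
  rewrite sqrtr_eq0 => hle.
  have hs : \sum_i (p u2 0 i - p v2 0 i) ^+ 2 = 0.
    by apply/eqP; rewrite eq_le hle sumr_ge0 // => i _; exact: sqr_ge0.
  move/negP: uv2; apply; apply/eqP; apply: pinj; apply/rowP => i.
  have := psumr_eq0P (fun i _ => sqr_ge0 (p u2 0 i - p v2 0 i)) hs (i := i) isT.
  by move/eqP; rewrite sqrf_eq0 subr_eq0 => /eqP.
have a1gt : 0 < a1 := lt_trans a2gt a21.
set t := a1 ^+ 2 - a2 ^+ 2.
have tgt : 0 < t by rewrite /t; nra.
have a2n0 : a2 != 0 by rewrite gt_eqF.
have cE : k ^+ 2 - 1 = t / a2 ^+ 2.
  by rewrite kE /t; field.
have k1 : 1 < k by rewrite kE ltr_pdivlMr // mul1r.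
set c := k ^+ 2 - 1.
have cgt : 0 < c by rewrite /c cE divr_gt0 // exprn_gt0.
set q : 'M[R]_(d.+2, d) := \matrix_(v, i) (p v 0 i - cen 0 i).
set J : 'M[R]_d.+2 := const_mx 1.
set N := q *m q^T.
have Dist : forall u v, u != v ->
   \sum_i (p u 0 i - p v 0 i) ^+ 2 = if e u v then a1 ^+ 2 else a2 ^+ 2.
  move=> a b ab; rewrite -edist_sq.
  have [h|h] := boolP (e a b).
    by have /(_ h) <- := proj1 (eE a b ab).
  case: (pdist a b ab) => hd; last by rewrite hd.
  by exfalso; move/negP: h; apply; apply/(proj2 (eE a b ab)).
have Rad : forall v, \sum_i (p v 0 i - cen 0 i) ^+ 2 = r ^+ 2.
  by move=> v; rewrite -edist_sq pr.
have NE : N = r ^+ 2 *: J - (a2 ^+ 2 / 2) *: (J - 1%:M) - (t / 2) *: A.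
  apply/matrixP => u v; rewrite /N /J /A /adjmx !mxE.
  have -> : \sum_j q u j * q^T j v =
      (\sum_i (p u 0 i - cen 0 i) ^+ 2 + \sum_i (p v 0 i - cen 0 i) ^+ 2
       - \sum_i (p u 0 i - p v 0 i) ^+ 2) / 2.
    rewrite -big_split -sumrB mulr_suml; apply: eq_bigr => i _; rewrite !mxE /=.
    by field.
  rewrite !Rad.
  have [->|uv] := eqVneq u v.
    rewrite eirr big1 => [|i _]; last by rewrite subrr expr0n.
    by rewrite /=; field.
  rewrite Dist //.
  by case: (e u v) => /=; rewrite /t; field.
have Jy : forall y : 'rV[R]_d.+2, y *m (const_mx 1 : 'cV[R]_d.+2) = 0 -> y *m J = 0.
  move=> y y1.
  have -> : J = (const_mx 1 : 'cV[R]_d.+2) *m (const_mx 1 : 'rV[R]_d.+2).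
    by apply/matrixP => i j; rewrite !mxE big_ord1 !mxE mulr1.
  by rewrite mulmxA y1 mul0mx.
have yN : forall y : 'rV[R]_d.+2, y *m (const_mx 1 : 'cV[R]_d.+2) = 0 ->
    y *m N = (a2 ^+ 2 / 2) *: y - (t / 2) *: (y *m A).
  move=> y y1; rewrite NE !mulmxBr -!scalemxAr Jy // mulmxBr Jy // mulmx1.
  by rewrite scaler0 sub0r sub0r scalerN opprK.
split => //; split.
  move=> y y1.
  have h0 : 0 <= (y *m N *m y^T) 0 0.
    have -> : y *m N *m y^T = (y *m q) *m (y *m q)^T by rewrite /N trmx_mul !mulmxA.
    exact: dot_ge0.
  move: h0; rewrite yN // mulmxBl -!scalemxAl entB !entZ => h0.
  rewrite /c cE.
  have : 0 <= a2 ^+ 2 by exact: sqr_ge0.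
  have : 0 < a2 ^+ 2 by rewrite exprn_gt0.
  move=> hp _.
  rewrite -(ler_pM2l hp) mulrA mulrCA mulfV ?gt_eqF // mulr1.
  lra.
set Q' := row_mx q (const_mx 1 : 'cV[R]_d.+2).
have rk : (\rank Q' < d.+2)%N by apply: leq_ltn_trans (rank_leq_col Q') _; rewrite addn1.
have kn0 : kermx Q' != 0.
  by rewrite -mxrank_eq0 mxrank_ker -lt0n subn_gt0.
have [i [j hij]] := matrix0Pn _ kn0.
set x := row i (kermx Q').
have xn0 : x != 0.
  apply/negP => /eqP x0; move: hij.
  have := congr1 (fun M : 'rV[R]_d.+2 => M 0 j) x0; rewrite [in X in X -> _]/x.
  by rewrite [X in X = _ -> _]mxE => ->; rewrite mxE eqxx.
have xQ : x *m Q' = 0 by rewrite /x -row_mul mulmx_ker row0.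
move: xQ; rewrite mul_mx_row => /eqP; rewrite row_mx_eq0 => /andP [/eqP xq /eqP x1].
exists x => //; split => //.
have : x *m N = 0 by rewrite /N mulmxA xq mul0mx.
rewrite yN // => /eqP; rewrite subr_eq0 => /eqP h.
have tn0 : t / 2 != 0 by rewrite gt_eqF // divr_gt0.
apply: (@scalerI _ _ (t / 2)) => //.
rewrite -h /c cE scalerA; congr (_ *: _).
have tn : t != 0 by rewrite gt_eqF.
by field; rewrite a2n0 tn.
Qed.

End Geo.

Unset Implicit Arguments.

Theorem corollary4p3 (R : realType) (d : nat) (e : rel 'I_(d.+2)) (k : R)
  (s : seq R) :
  simple_graph e ->
  eigenvalues_desc (adjmx R e) s ->
  spherical_rep e d k ->
  k = Num.sqrt (1 / s`_1 + 1) /\ 0 < s`_1.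
Proof.
move=> sg [srt cA] sr.
have [esym eirr] := sg.
have [k1 [G1 G2]] := geo sg sr.
have cgt : 0 < k ^+ 2 - 1 by rewrite subr_gt0 expr_gt1 // ltW // (lt_trans ltr01).
have AT : (adjmx R e)^T = adjmx R e.
  by apply/matrixP => i j; rewrite !mxE esym.
have Apos : forall i j, 0 <= adjmx R e i j by move=> i j; rewrite mxE ler0n.
have s1 := core cgt AT Apos srt cA G1 G2.
rewrite s1; split; last by rewrite invr_gt0.
rewrite div1r invrK subrK sqrtr_sqr ger0_norm //.
exact: ltW (lt_trans ltr01 k1).
Qed.
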